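(* Let $m\ge2$ and $2^m\le n<2^m+2^{m-1}-1$. Then every $f\in\mathbf{SB}_n$ satisfies $\mathcal{FAI}(f)\le\max\{2^m-2,\ 2n-3\cdot2^{m-1}+2\}$.
   Context: $\mathbf{SB}_n$ is the set of symmetric Boolean functions on $n$ variables; $\deg$ is the algebraic degree. $\mathcal{AI}(f)=\min\{\deg(g): g\neq0,\ gf=0 \text{ or } g(f+1)=0\}$ is the algebraic immunity, and the fast algebraic immunity is $\mathcal{FAI}(f)=\min\big(\{2\mathcal{AI}(f)\}\cup\{\deg(g)+\deg(gf): g\in\mathbf{B}_n,\ 1\le\deg(g)<\mathcal{AI}(f)\}\big)$, where $\mathbf{B}_n$ is the set of all Boolean functions on $n$ variables. *)

(* Defs.v *)
From mathcomp Require Import all_boot.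
From mathcomp Require perm.
Set Implicit Arguments. Unset Strict Implicit. Unset Printing Implicit Defensive.

Notation bvec n := ({ffun 'I_n -> bool}).
Notation boolfun n := ({ffun bvec n -> bool}).

Definition bmul n (g f : boolfun n) : boolfun n := [ffun x => g x && f x].
Definition bcompl n (f : boolfun n) : boolfun n := [ffun x => ~~ f x].
Definition bzero n : boolfun n := [ffun _ => false].

Definition supp n (x : bvec n) : {set 'I_n} := [set i | x i].

(* ANF coefficient of the monomial prod_{i in S} x_i (Moebius transform over F_2). *)
Definition anf n (f : boolfun n) (S : {set 'I_n}) : bool :=
  \big[addb/false]_(x : bvec n | supp x \subset S) f x.

(* Algebraic degree: largest |S| with nonzero ANF coefficient (0 for f = 0). *)
Definition deg n (f : boolfun n) : nat :=
  \max_(S : {set 'I_n} | anf f S) #|S|.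

(* Algebraic immunity. The set of admissible g is never empty
   (f and f+1 annihilate each other and one of them is nonzero). *)
Definition AI n (f : boolfun n) : nat :=
  \big[minn/n]_(g : boolfun n |
      (g != bzero n) && ((bmul g f == bzero n) || (bmul g (bcompl f) == bzero n)))
    deg g.

Definition FAI n (f : boolfun n) : nat :=
  minn (2 * AI f)
    (\big[minn/(2 * AI f)]_(g : boolfun n | (1 <= deg g) && (deg g < AI f))
        (deg g + deg (bmul g f))).

Definition sym_boolfun n (f : boolfun n) : Prop :=
  forall (s : perm.perm_of 'I_n) (x : bvec n), f [ffun i => x (perm.fun_of_perm s i)] = f x.

(* Main.v *)
Require Import Defs.
From mathcomp Require Import all_boot.
From mathcomp Require Import perm.
From Stdlib Require Import Lia.
Set Implicit Arguments. Unset Strict Implicit. Unset Printing Implicit Defensive.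

Notation oC k w := (odd 'C(k, w)).

Ltac nlia := repeat match goal with
  | H : is_true (_ <= _) |- _ => apply (elimT leP) in H
  | H : is_true (_ < _) |- _ => apply (elimT ltP) in H
  end; try apply/leP;
  repeat match goal with
  | H : context [addn _ _] |- _ => rewrite -plusE in H
  | H : context [subn _ _] |- _ => rewrite -minusE in H
  | H : context [muln _ _] |- _ => rewrite -multE in H
  | |- context [addn _ _] => rewrite -plusE
  | |- context [subn _ _] => rewrite -minusE
  | |- context [muln _ _] => rewrite -multE
  end; lia.

Lemma binP2 a k w : oC (k + 2 ^ a) w = oC k w (+) ((2 ^ a <= w) && oC k (w - 2 ^ a)).
Proof.
elim: a k w => [|a IH] k w.
  rewrite expn0 addn1; case: w => [|w]; first by rewrite !bin0.
  by rewrite binS oddD /= subn1.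
rewrite expnS mul2n -addnn addnA IH !IH.
case: (leqP (2 ^ a) w) => Hw /=; last first.
  have -> : (2 ^ a + 2 ^ a <= w) = false by apply/negbTE; rewrite -ltnNge ltn_addr.
  by rewrite addbF.
rewrite -subnDA (leq_subRL _ Hw).
by rewrite !addbA -(addbA (oC k w)) addbb addbF.
Qed.

Definition xr N (F : nat -> bool) := \big[addb/false]_(0 <= u < N) F u.

Lemma xr_trunc (F : nat -> bool) M N : M <= N -> (forall u, M <= u -> F u = false) ->
  xr N F = xr M F.
Proof.
move=> HMN HF; rewrite /xr (big_cat_nat (leq0n M) HMN) /=.
rewrite [X in _ (+) X]big1_seq ?addbF // => u /andP [_]; rewrite mem_index_iota => /andP [Hu _].
exact: HF.
Qed.

Lemma xr_shift P N (F : nat -> bool) : P <= N ->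
  xr N (fun w => (P <= w) && F w) = xr (N - P) (fun u => F (u + P)).
Proof.
move=> HPN; rewrite /xr (big_cat_nat (leq0n P) HPN) /=.
rewrite big1_seq; last by move=> u /andP [_]; rewrite mem_index_iota => /andP [_ Hu]; rewrite leqNgt Hu.
rewrite -{1}(add0n P) big_addn /=; apply: eq_bigr => u _.
by rewrite leq_addl.
Qed.

Lemma xr_add N F G : xr N (fun u => F u (+) G u) = xr N F (+) xr N G.
Proof. by rewrite /xr big_split. Qed.

Lemma xr_andl N a F : xr N (fun u => a && F u) = a && xr N F.
Proof. case: a => //; rewrite /xr big1 //. Qed.

Lemma xr_ext N F G : (forall u, u < N -> F u = G u) -> xr N F = xr N G.
Proof.
move=> H; rewrite /xr big_nat_cond [RHS]big_nat_cond; apply: eq_bigr => u /andP [/andP [_ Hu] _].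
exact: H.
Qed.
Lemma xr_L a k0 N G : k0 + 2 ^ a < N ->
  xr N (fun u => oC (k0 + 2 ^ a) u && G u) = xr N (fun u => oC k0 u && (G u (+) G (u + 2 ^ a))).
Proof.
move=> HN.
have E : xr N (fun u => oC (k0 + 2 ^ a) u && G u) =
   xr N (fun u => oC k0 u && G u) (+) xr N (fun u => (2 ^ a <= u) && (oC k0 (u - 2^a) && G u)).
  rewrite -xr_add; apply: xr_ext => u _; rewrite binP2.
  by case: (oC k0 u); case: (2 ^ a <= u); case: (oC k0 (u - 2 ^ a)); case: (G u).
rewrite E xr_shift; last by apply: leq_trans (ltnW HN); rewrite leq_addl.
have HN1 : k0.+1 <= N - 2 ^ a by rewrite leq_subRL; [rewrite addnS addnC | apply: leq_trans (ltnW HN); rewrite leq_addl].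
have HN2 : k0.+1 <= N by apply: leq_trans HN; rewrite ltnS leq_addr.
rewrite (@xr_trunc _ k0.+1 (N - 2 ^ a) HN1); last by move=> u Hu; rewrite addnK bin_small.
rewrite (@xr_trunc (fun u => oC k0 u && G u) k0.+1 N HN2); last by move=> u Hu; rewrite bin_small.
rewrite (@xr_trunc _ k0.+1 N HN2); last by move=> u Hu; rewrite bin_small.
rewrite -xr_add; apply: xr_ext => u _; rewrite addnK.
by case: (oC k0 u); case: (G u); case: (G (u + 2 ^ a)).
Qed.

Lemma xr_binsum k N : 0 < k -> k < N -> xr N (fun u => oC k u) = false.
Proof.
move=> Hk HN; have := @xr_L 0 k.-1 N (fun _ => true).
rewrite expn0 addn1 prednK // => H.
rewrite (xr_ext (G := fun u => oC k u && true)); last by move=> u _; rewrite andbT.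
rewrite H // /xr big1 // => u _ /=; by rewrite andbF.
Qed.


Lemma supp_inj n : injective (@supp n).
Proof.
move=> x y E; apply/ffunP => i.
by have := congr1 (fun A : {set 'I_n} => i \in A) E; rewrite /supp !inE.
Qed.

Lemma sym_eq n (f : boolfun n) : sym_boolfun f ->
  forall x y : bvec n, #|supp x| = #|supp y| -> f x = f y.
Proof.
move=> Hs.
suff H : forall d (x y : bvec n), #|[set i | x i != y i]| <= d -> #|supp x| = #|supp y| -> f x = f y.
  by move=> x y; apply: H (leqnn _).
elim=> [|d IH] x y Hd Hc.
  have A0 : [set i | x i != y i] = set0 by apply: cards0_eq; apply/eqP; rewrite -leqn0.
  have -> // : x = y.
  apply/ffunP => i; apply/eqP; apply: contraT => Hi.
  have : i \in [set i | x i != y i] by rewrite inE.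
  by rewrite A0 inE.
case: (eqVneq x y) => [-> //|Hxy].
have Hsx : ~~ (supp x \subset supp y).
  apply/negP => Hsub; apply: (negP Hxy); apply/eqP; apply: supp_inj.
  have [_ E] := subset_leqif_cards Hsub; apply/eqP; by rewrite -E Hc.
have Hsy : ~~ (supp y \subset supp x).
  apply/negP => Hsub; apply: (negP Hxy); apply/eqP; apply: supp_inj.
  have [_ E] := subset_leqif_cards Hsub; apply/eqP; by rewrite eq_sym -E Hc.
case/subsetPn: Hsx => i Hi Hi'.
case/subsetPn: Hsy => j Hj Hj'.
rewrite /supp !inE in Hi Hi' Hj Hj'.
set x' := [ffun k => x (tperm i j k)].
have -> : f x = f x' by rewrite /x' Hs.
apply: IH.
  have Hsub : [set k | x' k != y k] \subset [set k | x k != y k] :\ i.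
    apply/subsetP => k; rewrite !inE /x' ffunE.
    case: (eqVneq k i) => [->|Hki]; first by rewrite tpermL (negbTE Hj') (negbTE Hi').
    case: (eqVneq k j) => [->|Hkj]; first by rewrite tpermR Hi Hj.
    have Hik : i != k by rewrite eq_sym.
    have Hjk : j != k by rewrite eq_sym.
    by rewrite tpermD.
  rewrite (cardsD1 i [set k | x k != y k]) inE Hi (negbTE Hi') /= in Hd.
  exact: leq_trans (subset_leq_card Hsub) Hd.
rewrite -Hc.
have -> : supp x' = tperm i j @^-1: supp x.
  by apply/setP => k; rewrite /supp !inE /x' ffunE.
exact: card_preimset perm_inj.
Qed.

Lemma supp_of n (A : {set 'I_n}) : supp [ffun i => i \in A] = A.
Proof. by apply/setP => i; rewrite /supp inE ffunE. Qed.

Lemma card_supp_draws n (S : {set 'I_n}) w :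
  #|[set x : bvec n | supp x \subset S & #|supp x| == w]| = 'C(#|S|, w).
Proof.
rewrite -(card_imset _ (@supp_inj n)) -cards_draws; apply: eq_card => A.
rewrite [in RHS]inE; apply/imsetP/idP.
  by case=> x; rewrite inE => Hx ->.
move=> HA; exists [ffun i => i \in A]; last by rewrite supp_of.
by rewrite inE supp_of.
Qed.

Lemma iter_addb c b : iter c (addb b) false = odd c && b.
Proof. by elim: c => //= c ->; case: b; case: (odd c). Qed.

Lemma anf_sym n (h : boolfun n) (V : nat -> bool) :
  (forall x, h x = V #|supp x|) ->
  forall S, anf h S = xr (#|S|.+1) (fun w => oC #|S| w && V w).
Proof.
move=> Hh S; rewrite /anf /xr big_mkord.
have Hle : forall x : bvec n, supp x \subset S -> #|supp x| < #|S|.+1.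
  by move=> x Hx; rewrite ltnS subset_leq_card.
rewrite (partition_big (fun x : bvec n => (inord #|supp x| : 'I_(#|S|.+1))) predT) //=.
apply: eq_bigr => w _.
rewrite (eq_bigr (fun _ => V w)); last first.
  move=> x /andP [Hx /eqP <-]; rewrite Hh inordK //; exact: Hle.
rewrite big_const iter_addb; congr (odd _ && _).
rewrite -(card_supp_draws S w); apply: eq_card => x; rewrite [in RHS]inE -[in LHS]topredE /=.
case Hx: (supp x \subset S) => //=.
apply/eqP/eqP => E.
  by rewrite -E inordK //; exact: Hle.
apply: val_inj => /=; rewrite inordK; [exact: E | exact: Hle].
Qed.

Lemma deg_le n (h : boolfun n) d : (forall S, anf h S -> #|S| <= d) -> deg h <= d.
Proof. by move=> H; apply/bigmax_leqP => S; apply: H. Qed.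

Lemma deg_ge n (h : boolfun n) S : anf h S -> #|S| <= deg h.
Proof. by move=> H; rewrite /deg; apply: (@leq_bigmax_cond _ _ (fun S : {set 'I_n} => #|S|) S H). Qed.

Lemma exS n j : j <= n -> exists S : {set 'I_n}, #|S| = j.
Proof.
move=> Hj; have : 0 < #|[set A : {set 'I_n} | #|A| == j]|.
  by rewrite card_draws card_ord bin_gt0.
by case/card_gt0P => S; rewrite inE => /eqP; exists S.
Qed.

Lemma bigmin_le (I : eqType) (r : seq I) (P : pred I) (F : I -> nat) x i0 :
  i0 \in r -> P i0 -> \big[minn/x]_(i <- r | P i) F i <= F i0.
Proof.
elim: r => // a r IH; rewrite inE big_cons => /orP [/eqP <- ->|Hr HP].
  exact: geq_minl.
case: (P a); last exact: IH.
exact: leq_trans (geq_minr _ _) (IH Hr HP).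
Qed.

Lemma FAI_le n (f : boolfun n) (g : boolfun n) B :
  1 <= deg g -> 2 * deg g <= B -> deg g + deg (bmul g f) <= B -> FAI f <= B.
Proof.
move=> H1 H2 H3; rewrite /FAI; case: (ltnP (deg g) (AI f)) => H.
  apply: leq_trans (geq_minr _ _) _.
  apply: leq_trans H3; apply: bigmin_le; first by rewrite mem_index_enum.
  by rewrite H1 H.
apply: leq_trans (geq_minl _ _) _; apply: leq_trans H2.
by rewrite leq_mul2l H orbT.
Qed.

Lemma bin_prod k w j : j <= w -> 'C(k, w) * 'C(w, j) = 'C(k, j) * 'C(k - j, w - j).
Proof.
move=> Hjw; case: (leqP w k) => Hwk; last first.
  rewrite bin_small // mul0n; case: (leqP j k) => Hjk; last by rewrite bin_small.
  by rewrite (bin_small (n := k - j)) ?muln0 // ltn_sub2r // (leq_ltn_trans Hjk).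
have Hjk := leq_trans Hjw Hwk.
apply/eqP; rewrite -(@eqn_pmul2r (j`! * (w - j)`! * (k - w)`!)); last by rewrite !muln_gt0 !fact_gt0.
have E1 : 'C(k, w) * 'C(w, j) * (j`! * (w - j)`! * (k - w)`!) = k`!.
  rewrite -(bin_fact Hwk) -(bin_fact Hjw) -!mulnA; congr (_ * _).
have E2 : 'C(k, j) * 'C(k - j, w - j) * (j`! * (w - j)`! * (k - w)`!) = k`!.
  have Hs : w - j <= k - j by rewrite leq_sub2r.
  rewrite -(bin_fact Hjk) -(bin_fact Hs) subnBA // subnK //.
  rewrite -!mulnA; congr (_ * _).
  by rewrite mulnCA.
by rewrite E1 E2.
Qed.

Definition sigF n j (V : nat -> bool) : boolfun n := [ffun x => oC #|supp x| j && V #|supp x|].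

Lemma anf_sigF n j V (S : {set 'I_n}) : anf (sigF n j V) S =
  (j <= #|S|) && oC #|S| j && xr (#|S|.+1 - j) (fun u => oC (#|S| - j) u && V (u + j)).
Proof.
rewrite (@anf_sym _ _ (fun w => oC w j && V w)); last by move=> x; rewrite ffunE.
set k := #|S|.
case: (leqP j k) => Hjk /=; last first.
  rewrite /xr big1 // => w _; case: (leqP w k) => H.
    by rewrite (bin_small (n := w)) ?andbF //; exact: leq_ltn_trans H Hjk.
  by rewrite bin_small.
rewrite (xr_ext (G := fun w => oC k j && ((j <= w) && (oC (k - j) (w - j) && V w)))); last first.
  move=> w _; case: (leqP j w) => Hjw.
    by rewrite andbA -oddM bin_prod // oddM /= andbA.
  by rewrite (bin_small (n := w) Hjw) /= !andbF.
rewrite xr_andl xr_shift; last exact: leqW.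
congr (_ && _); apply: xr_ext => u _; by rewrite addnK.
Qed.

Lemma deg_zero n : deg (bzero n) = 0.
Proof.
apply/eqP; rewrite -leqn0; apply: deg_le => S.
by rewrite /anf big1 // => x _; rewrite ffunE.
Qed.

Lemma caseA (n P a t : nat) (f : boolfun n) (V : nat -> bool) r B :
  P = 2 ^ a -> n = P + P + t -> t < r -> r < P -> V r = V (r + P) ->
  (forall x, f x = V #|supp x|) -> (P - 1) + (P - 1) <= B -> FAI f <= B.
Proof.
move=> HP Hn Htr HrP HVr HV HB.
pose g : boolfun n := [ffun x => #|supp x| %% P == r].
have Hanf : forall S, anf g S = xr (#|S|.+1) (fun w => oC #|S| w && (w %% P == r)).
  by apply: anf_sym => x; rewrite ffunE.
have Hdg : deg g <= P - 1.
  apply: deg_le => S; rewrite Hanf; set k := #|S|.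
  case: (ltnP k P) => HkP; first by move=> _; nlia.
  rewrite (xr_ext (G := fun w => oC ((k - P) + 2 ^ a) w && (w %% P == r))); last first.
    by move=> w _; rewrite -HP subnK.
  rewrite xr_L; last by rewrite -HP subnK.
  rewrite /xr big1 // => u _; rewrite -HP modnDr addbb; exact: andbF.
have Hdg1 : r <= deg g.
  have [S HS] := exS (n := n) (j := r) (ltac:(nlia)).
  rewrite -HS; apply: deg_ge; rewrite Hanf HS /xr big_nat_recr //= binn modn_small //.
  rewrite eqxx big1_seq // => w /andP [_]; rewrite mem_index_iota => /andP [_ Hw].
  by rewrite modn_small ?(ltn_eqF Hw) ?andbF // (ltn_trans Hw).
have Hgf : deg (bmul g f) <= P - 1.
  have Hx : forall x, g x -> f x = V r.
    move=> x; rewrite ffunE => /eqP Hx; rewrite HV.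
    have Hle : #|supp x| <= n by apply: leq_trans (max_card _) _; rewrite card_ord.
    move: Hx Hle; set w := #|supp x| => Hx Hle.
    have H4 := divn_eq w P; rewrite Hx in H4.
    have Hq : w %/ P < 2.
      rewrite ltnNge; apply/negP => H2.
      have : 2 * P <= w %/ P * P by rewrite leq_mul2r H2 orbT.
      move: H4; set X := w %/ P * P => H4 H3; nlia.
    rewrite H4; move: Hq; case: (w %/ P) => [|[|q]] // _.
    by rewrite ?mul1n addnC HVr.
  case HVr' : (V r).
    have -> : bmul g f = g.
      apply/ffunP => x; rewrite /bmul ffunE; case Hg: (g x) => //=; by rewrite (Hx _ Hg) HVr'.
    exact: Hdg.
  have -> : bmul g f = bzero n.
    apply/ffunP => x; rewrite /bmul /bzero ffunE [in RHS]ffunE; case Hg: (g x) => //=.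
    by rewrite (Hx _ Hg) HVr'.
  by rewrite deg_zero.
apply: (@FAI_le _ _ g); nlia.
Qed.

Lemma caseB (n P a t : nat) (f : boolfun n) (V : nat -> bool) B :
  P = 2 ^ a -> n = P + P + t -> t.+1 < P ->
  (forall u, t < u -> u < P -> V u (+) V (u + P)) ->
  (forall x, f x = V #|supp x|) -> P + 2 * t.+1 <= B -> FAI f <= B.
Proof.
move=> HP Hn HtP HVd HV HB.
set j := t.+1.
pose g := @sigF n j (fun _ => true).
have Hgf : bmul g f = @sigF n j V by apply/ffunP => x; rewrite /bmul !ffunE HV andbT.
have Hdg : deg g <= j.
  apply: deg_le => S; rewrite anf_sigF => /andP [/andP [Hjk _] Hx].
  rewrite leqNgt; apply/negP => Hkj.
  move: Hx; rewrite (xr_ext (G := fun u => oC (#|S| - j) u)); last by move=> u _; rewrite andbT.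
  by rewrite xr_binsum //; nlia.
have Hdg1 : j <= deg g.
  have [S HS] := exS (n := n) (j := j) (ltac:(nlia)).
  rewrite -HS; apply: deg_ge; rewrite anf_sigF HS leqnn binn subSnn /xr big_nat1 subnn bin0.
  by [].
have Hdgf : deg (@sigF n j V) <= B - j.
  apply: deg_le => S; rewrite anf_sigF => /andP [/andP [Hjk HCj] Hx].
  rewrite leqNgt; apply/negP => Hk.
  have Hkn : #|S| <= n by apply: leq_trans (max_card _) _; rewrite card_ord.
  move: Hjk HCj Hx Hk Hkn; set k := #|S| => Hjk HCj Hx Hk Hkn.
  set k2 := k - j - P.
  have Ek : k - j = k2 + 2 ^ a by rewrite -HP /k2; nlia.
  case: (ltnP (j + k2) P) => Hjk2.
    move: Hx; rewrite Ek xr_L; last by rewrite -HP; nlia.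
    rewrite (xr_ext (G := fun u => oC k2 u)); last first.
      move=> u _; case: (leqP u k2) => Hu.
        by rewrite -HP addnAC HVd ?andbT //; nlia.
      by rewrite bin_small.
    by rewrite xr_binsum //; nlia.
  have E1 : k = (j + k2) + 2 ^ a by rewrite -HP /k2; nlia.
  have E2 : j + k2 = (j + k2 - P) + 2 ^ a by rewrite -HP; nlia.
  move: HCj; rewrite E1 binP2 E2 binP2 -HP.
  have -> : (P <= j) = false by apply/negbTE; rewrite -ltnNge.
  rewrite /= !addbF bin_small //; nlia.
apply: (@FAI_le _ _ g); rewrite ?Hgf; nlia.
Qed.

Theorem corollary7 (m n : nat) (f : boolfun n) :
  2 <= m -> 2 ^ m <= n -> n < 2 ^ m + 2 ^ (m - 1) - 1 ->
  sym_boolfun f ->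
  FAI f <= maxn (2 ^ m - 2) (2 * n - 3 * 2 ^ (m - 1) + 2).
Proof.
move=> Hm Hn1 Hn2 Hs.
have E2m : 2 ^ m = 2 ^ (m - 1) + 2 ^ (m - 1).
  by rewrite addnn -mul2n -expnS subn1 prednK // ltnW.
have HP2 : 2 <= 2 ^ (m - 1).
  by rewrite -{1}(expn1 2) leq_pexp2l // subn_gt0.
rewrite E2m in Hn1 Hn2 *.
move: HP2 Hn1 Hn2; set P := 2 ^ (m - 1) => HP2 Hn1 Hn2.
have HPd : P = 2 ^ (m - 1) by [].
set B := maxn _ _.
have HB1 : P + P - 2 <= B := leq_maxl _ _.
have HB2 : 2 * n - 3 * P + 2 <= B := leq_maxr _ _.
clearbody B P.
pose V w := if [pick y : bvec n | #|supp y| == w] is Some y then f y else false.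
have HV : forall x, f x = V #|supp x|.
  move=> x; rewrite /V; case: pickP => [y /eqP Hy|H]; first by apply: sym_eq => //; rewrite Hy.
  by have := H x; rewrite eqxx.
clearbody V.
have [t Hn] : exists t, n = P + P + t by exists (n - (P + P)); nlia.
case: (boolP [exists r : 'I_P, (t < r) && (V r == V (r + P))]).
  case/existsP => r /andP [Htr /eqP HVr].
  apply: (caseA HPd Hn Htr (ltn_ord r) HVr HV); nlia.
move/existsPn => Hno.
apply: (caseB HPd Hn _ _ HV); [nlia | | nlia].
move=> u Htu HuP; have := Hno (Ordinal HuP); rewrite /= Htu /=.
by case: (V u); case: (V (u + P)).
Qed.
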